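(* Let $1\le k<n$, let $C$ be an $n\times n$ pairwise comparison matrix whose upper-left $k\times k$ submatrix $C_k$ is consistent (equivalently $\mathit{CI}(C_k)=0$ when $k\ge2$). Then the matrix $A_k=I_k-\frac{1}{n-1}(C_k-I_k)$ is invertible, so the arithmetic HRE system $A_k w=b$ with $b_i=\frac{1}{n-1}\sum_{j=k+1}^n c_{ij}w(a_j)$ ($i=1,\dots,k$) has a unique solution for any positive reference weights $w(a_{k+1}),\dots,w(a_n)$.
   Context: A pairwise comparison matrix is a square matrix with positive entries, $c_{ii}=1$ and $c_{ij}=1/c_{ji}$. It is consistent if $c_{ij}c_{jl}=c_{il}$ for all indices $i,j,l$. For a $k\times k$ pairwise comparison matrix $M$ ($k\ge 2$), $\mathit{CI}(M)=\frac{\rho(M)-k}{k-1}$ with $\rho$ the spectral radius. *)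

(* Defs.v *)
From HB Require Import structures.
From mathcomp Require Import all_boot all_order all_algebra.
Set Implicit Arguments. Unset Strict Implicit. Unset Printing Implicit Defensive.
Import Order.TTheory GRing.Theory Num.Theory.
Local Open Scope ring_scope.

Definition pcm (R : realFieldType) (n : nat) (C : 'M[R]_n) : Prop :=
  [/\ (forall i j, 0 < C i j), (forall i, C i i = 1) & (forall i j, C i j = (C j i)^-1)].

Definition consistent (R : realFieldType) (n : nat) (C : 'M[R]_n) : Prop :=
  forall i j l, C i j * C j l = C i l.

Definition HRE_A (R : realFieldType) (k m : nat) (C : 'M[R]_(k + m)) : 'M[R]_k :=
  1%:M - ((k + m).-1%:R)^-1 *: (ulsubmx C - 1%:M).

(* b_i = 1/(n-1) * sum_{j=k+1}^n c_ij w(a_j); reference weights indexed by 'I_m. *)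
Definition HRE_b (R : realFieldType) (k m : nat) (C : 'M[R]_(k + m))
    (wref : 'I_m -> R) : 'cV[R]_k :=
  \col_(i < k) (((k + m).-1%:R)^-1 * \sum_(j < m) C (lshift m i) (rshift k j) * wref j).

(* Main.v *)
Require Import Defs.
From HB Require Import structures.
From mathcomp Require Import all_boot all_order all_algebra.
From mathcomp Require Import ring lra.
Import Order.TTheory GRing.Theory Num.Theory.
Local Open Scope ring_scope.

Theorem mainTheorem2 (R : realFieldType) (k m : nat) (C : 'M[R]_(k + m)) :
  (0 < k)%N -> (0 < m)%N ->
  pcm C -> consistent (ulsubmx C) ->
  HRE_A C \in unitmx /\
  (forall wref : 'I_m -> R, (forall j, 0 < wref j) ->
     exists! w : 'cV[R]_k, HRE_A C *m w = HRE_b C wref).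
Proof.
move=> hk hm _ hcons.
set D := ulsubmx C.
set N : R := ((k + m).-1)%:R.
have hN1 : N + 1 = k%:R + m%:R.
  rewrite /N -natrD natr1 prednK //.
  by rewrite addn_gt0 hk.
have hNpos : 0 < N.
  rewrite /N ltr0n -subn1 subn_gt0.
  by move: hk hm; case: (k) => // k' _; case: (m) => // m' _; rewrite addSn addnS.
have hmpos : 0 < (m%:R : R) by rewrite ltr0n.
have hD2 : D *m D = k%:R *: D.
  apply/matrixP => i j; rewrite [LHS]mxE [RHS]mxE.
  under eq_bigr => l _ do rewrite hcons.
  by rewrite sumr_const card_ord mulr_natl.
set c := N^-1.
have hA : HRE_A C = (1 + c)%:M - c *: D.
  apply/matrixP => i j; rewrite /HRE_A !mxE -/D -/c.
  case: (i == j); rewrite /= ?mulr1n ?mulr0n; ring.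
set a := N / (N + 1).
set b := N / ((N + 1) * m%:R).
have hAB : HRE_A C *m (a%:M + b *: D) = 1%:M.
  have ha : (1 + c) * a = 1.
    rewrite /c /a; field; apply/andP; split; lra.
  have hb : (1 + c) * b - c * a - c * b * k%:R = 0.
    rewrite /c /a /b.
    have -> : (k%:R : R) = N + 1 - m%:R by rewrite hN1; ring.
    field; apply/and3P; split; lra.
  rewrite hA mulmxDr !mulmxBl mul_scalar_mx mul_mx_scalar mul_scalar_mx.
  rewrite -scalemxAr -scalemxAl hD2 !scalerA.
  apply/matrixP => i j; rewrite !mxE.
  move: (C (lshift m i) (lshift m j)) => x.
  clearbody a b c; case: (i == j); rewrite ?mulr1n ?mulr0n.
    transitivity ((1 + c) * a + ((1 + c) * b - c * a - c * b * k%:R) * x).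
      ring.
    by rewrite ha hb mul0r addr0.
  transitivity (((1 + c) * b - c * a - c * b * k%:R) * x).
    ring.
  by rewrite hb mul0r.
have hU : HRE_A C \in unitmx by case: (mulmx1_unit hAB).
split=> // wref _.
exists (invmx (HRE_A C) *m HRE_b C wref); split.
  by rewrite mulKVmx.
by move=> w <-; rewrite mulKmx.
Qed.
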